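(* Let $(i,k)\in\mathcal I_1$. Then $F_{\le(i,k)}F_{st}=0$ for every $(s,t)\in\mathcal I_1$ with $(s,t)\preceq(i,k)$; equivalently, $F_{<(i,k)}F_{st}=0$ for every $(s,t)\in\mathcal I_1$ with $(s,t)\prec(i,k)$.
   Context: Let $m,n\ge 1$, let $q$ be an indeterminate, and let indices range over $[1,m+n]$. Put $q_i=q$ if $i\le m$ and $q_i=q^{-1}$ if $i>m$. Let $\mathcal I_0=\{(i,j):1\le i<j\le m \text{ or } m+1\le i<j\le m+n\}$, $\mathcal I_1=\{(i,j):1\le i\le m<j\le m+n\}$. The quantum supergroup $U_q=U_q(\mathfrak{gl}(m|n))$ is the associative $\mathbb C(q)$-superalgebra generated by $K_j^{\pm1}$ ($j\in[1,m+n]$) and $E_{i,i+1},F_{i,i+1}$ ($1\le i<m+n$), where $K_j^{\pm1}$ and $E_{i,i+1},F_{i,i+1}$ for $i\ne m$ are even and $E_{m,m+1},F_{m,m+1}$ are odd, subject to: $K_iK_j=K_jK_i$, $K_iK_i^{-1}=1$; $K_iE_{j,j+1}K_i^{-1}=q_i^{\delta_{ij}-\delta_{i,j+1}}E_{j,j+1}$, $K_iF_{j,j+1}K_i^{-1}=q_i^{-(\delta_{ij}-\delta_{i,j+1})}F_{j,j+1}$; $[E_{i,i+1},F_{j,j+1}]=\delta_{ij}\frac{K_iK_{i+1}^{-1}-K_i^{-1}K_{i+1}}{q_i-q_i^{-1}}$; $E_{m,m+1}^2=F_{m,m+1}^2=0$; $E_{i,i+1}E_{j,j+1}=E_{j,j+1}E_{i,i+1}$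 and $F_{i,i+1}F_{j,j+1}=F_{j,j+1}F_{i,i+1}$ for $|i-j|>1$; for $|i-j|=1$, $i\neq m$, and $X\in\{E,F\}$: $X_{i,i+1}^2X_{j,j+1}-(q+q^{-1})X_{i,i+1}X_{j,j+1}X_{i,i+1}+X_{j,j+1}X_{i,i+1}^2=0$; and $[E_{m-1,m+2},E_{m,m+1}]=[F_{m-1,m+2},F_{m,m+1}]=0$. Here for homogeneous $x,y$, $[x,y]=xy-(-1)^{\bar x\bar y}yx$. For $i<j$ with $j>i+1$, $E_{ij}=E_{ic}E_{cj}-q_c^{-1}E_{cj}E_{ic}$ and $F_{ij}=-q_cF_{ic}F_{cj}+F_{cj}F_{ic}$ for $i<c<j$ (independent of $c$); $E_{ij},F_{ij}$ are odd iff $(i,j)\in\mathcal I_1$. Order on $\mathcal I_1$: $(i,j)\prec(s,t)$ iff $j>t$, or $j=t$ and $i<s$. For $I\subseteq\mathcal I_1$, $F_I$ is the product of the $F_{ij}$, $(i,j)\in I$, taken in increasing $\prec$-order ($F_\emptyset=1$). For $(i,j)\in\mathcal I_1$, $F_{\ge(i,j)}$, $F_{>(i,j)}$, $F_{\le(i,j)}$, $F_{<(i,j)}$ denote $F_I$ for $I=\{(s,t)\in\mathcal I_1:(s,t)\succeq(i,j)\}$, $\{(s,t):(s,t)\succ(i,j)\}$, $\{(s,t):(s,t)\preceq(i,j)\}$, $\{(s,t):(s,t)\prec(i,j)\}$ respectively. *)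

(* Defs.v *)
From HB Require Import structures.
From mathcomp Require Import all_boot all_order all_algebra all_field.
Set Implicit Arguments. Unset Strict Implicit. Unset Printing Implicit Defensive.
Import Order.TTheory GRing.Theory Num.Theory.
Local Open Scope ring_scope.

(* The ground field C(q): rational functions in q over the (algebraic) complex numbers. *)
Definition Cq : fieldType := {fraction {poly algC}}.
Definition qq : Cq := FracField.tofrac ('X : {poly algC}).

Definition qi (m i : nat) : Cq := if (i <= m)%N then qq else qq^-1.

Definition dlt (i j : nat) : int := if i == j then 1 else 0.

Section Gens.
Variable A : algType Cq.
Variable m : nat.

(* E_{ij}, F_{ij} for i < j, defined recursively with c = i+1:
   E_{ij} = E_{i,i+1} E_{i+1,j} - q_{i+1}^{-1} E_{i+1,j} E_{i,i+1}
   F_{ij} = - q_{i+1} F_{i,i+1} F_{i+1,j} + F_{i+1,j} F_{i,i+1}.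
   Here E i stands for E_{i,i+1}, F i for F_{i,i+1}. *)
Fixpoint Erec (E : nat -> A) (d i : nat) : A :=
  match d with
  | 0 => E i
  | d'.+1 => E i * Erec E d' i.+1 - (qi m i.+1)^-1 *: (Erec E d' i.+1 * E i)
  end.
Fixpoint Frec (F : nat -> A) (d i : nat) : A :=
  match d with
  | 0 => F i
  | d'.+1 => - (qi m i.+1 *: (F i * Frec F d' i.+1)) + Frec F d' i.+1 * F i
  end.
Definition Eij (E : nat -> A) (i j : nat) : A := Erec E (j - i).-1 i.
Definition Fij (F : nat -> A) (i j : nat) : A := Frec F (j - i).-1 i.

End Gens.

(* Defining relations of U_q(gl(m|n)) on generators K_j (K j), K_j^{-1} (Kinv j),
   E_{i,i+1} (E i), F_{i,i+1} (F i), inside an arbitrary associative C(q)-algebra A.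
   Signs of super-commutators are written out explicitly according to the parities
   (only E_{m,m+1}, F_{m,m+1}, and E_{m-1,m+2}, F_{m-1,m+2} among the elements involved are odd). *)
Definition Uq_rels (m n : nat) (A : algType Cq) (K Kinv E F : nat -> A) : Prop :=
  (forall i j, (1 <= i <= m + n)%N -> (1 <= j <= m + n)%N -> K i * K j = K j * K i) /\
  (forall i, (1 <= i <= m + n)%N -> K i * Kinv i = 1 /\ Kinv i * K i = 1) /\
  (forall i j, (1 <= i <= m + n)%N -> (1 <= j < m + n)%N ->
     K i * E j * Kinv i = (qi m i ^ (dlt i j - dlt i j.+1)) *: E j /\
     K i * F j * Kinv i = (qi m i ^ (- (dlt i j - dlt i j.+1))) *: F j) /\
  (forall i j, (1 <= i < m + n)%N -> (1 <= j < m + n)%N ->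
     (if i == j then
        (if i == m then E i * F j + F j * E i else E i * F j - F j * E i)
        = (qi m i - (qi m i)^-1)^-1 *: (K i * Kinv i.+1 - Kinv i * K i.+1)
      else E i * F j - F j * E i = 0)) /\
  E m * E m = 0 /\ F m * F m = 0 /\
  (forall i j, (1 <= i < m + n)%N -> (1 <= j < m + n)%N -> (i.+1 < j)%N \/ (j.+1 < i)%N ->
     E i * E j = E j * E i /\ F i * F j = F j * F i) /\
  (forall i j, (1 <= i < m + n)%N -> (1 <= j < m + n)%N -> (j == i.+1) || (i == j.+1) ->
     i != m ->
     E i * E i * E j - (qq + qq^-1) *: (E i * E j * E i) + E j * (E i * E i) = 0 /\
     F i * F i * F j - (qq + qq^-1) *: (F i * F j * F i) + F j * (F i * F i) = 0) /\
  (* [E_{m-1,m+2}, E_{m,m+1}] = [F_{m-1,m+2}, F_{m,m+1}] = 0 (both odd: anticommutator),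
     meaningful when m >= 2 and n >= 2 *)
  ((2 <= m)%N -> (2 <= n)%N ->
     Eij m E m.-1 (m + 2) * E m + E m * Eij m E m.-1 (m + 2) = 0 /\
     Fij m F m.-1 (m + 2) * F m + F m * Fij m F m.-1 (m + 2) = 0).

Definition inI1 (m n : nat) (p : nat * nat) : bool :=
  [&& (1 <= p.1)%N, (p.1 <= m)%N, (m < p.2)%N & (p.2 <= m + n)%N].

Definition precb (p r : nat * nat) : bool :=
  (r.2 < p.2)%N || ((p.2 == r.2) && (p.1 < r.1)%N).
Definition preceqb (p r : nat * nat) : bool := precb p r || (p == r).

(* I_1 listed in increasing order: t from m+n down to m+1, then s from 1 to m *)
Definition I1seq (m n : nat) : seq (nat * nat) :=
  flatten [seq [seq (s, t) | s <- iota 1 m] | t <- rev (iota m.+1 n)].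

Definition Fle (m n : nat) (A : algType Cq) (F : nat -> A) (p : nat * nat) : A :=
  \prod_(r <- I1seq m n | preceqb r p) Fij m F r.1 r.2.
Definition Flt (m n : nat) (A : algType Cq) (F : nat -> A) (p : nat * nat) : A :=
  \prod_(r <- I1seq m n | precb r p) Fij m F r.1 r.2.

(* Main.v *)
Require Import Defs.
From HB Require Import structures.
From mathcomp Require Import all_boot all_order all_algebra all_field.
From mathcomp Require Import ring zify.
Import GRing.Theory.
Local Open Scope ring_scope.

Set Implicit Arguments. Unset Strict Implicit. Unset Printing Implicit Defensive.

Section LC.
Variable (K : fieldType) (A : algType K).
Definition lcf (S : nat -> A) (k : nat -> K) : A := \sum_(i < 12) k i *: S i.
Lemma lcfD S k l : lcf S k + lcf S l = lcf S (fun i => k i + l i).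
Proof. by rewrite /lcf -big_split; apply: eq_bigr => i _; rewrite scalerDl. Qed.
Lemma lcfN S k : - lcf S k = lcf S (fun i => - k i).
Proof. by rewrite /lcf -sumrN; apply: eq_bigr => i _; rewrite scaleNr. Qed.
Lemma lcfB S k l : lcf S k - lcf S l = lcf S (fun i => k i - l i).
Proof. by rewrite lcfN lcfD. Qed.
Lemma lcfZ S c k : c *: lcf S k = lcf S (fun i => c * k i).
Proof. by rewrite /lcf scaler_sumr; apply: eq_bigr => i _; rewrite scalerA. Qed.
Lemma lcf_ext S k l : (forall i, (i < 12)%N -> k i = l i) -> lcf S k = lcf S l.
Proof. by move=> h; apply: eq_bigr => i _; rewrite h. Qed.
Lemma lcf_atom (s : seq A) j : (j < 12)%N ->
  nth 0 s j = lcf (fun i => nth 0 s i) (fun i => (i == j)%:R).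
Proof.
move=> hj; rewrite /lcf (bigD1 (Ordinal hj)) //= eqxx scale1r big1 ?addr0 //.
move=> i /negPf; rewrite -val_eqE /= => ->; by rewrite scale0r.
Qed.
Lemma lcf_ext12 S k l : k 0 = l 0 -> k 1 = l 1 -> k 2 = l 2 -> k 3 = l 3 -> k 4 = l 4 -> k 5 = l 5 -> k 6 = l 6 -> k 7 = l 7 -> k 8 = l 8 -> k 9 = l 9 -> k 10 = l 10 -> k 11 = l 11 -> lcf S k = lcf S l.
Proof.
move=> h0 h1 h2 h3 h4 h5 h6 h7 h8 h9 h10 h11; apply: lcf_ext => i hi.
by do 12 (case: i hi => [|i] hi //).
Qed.
End LC.
Arguments lcf {K A} S k : simpl never.
Arguments lcf_atom {K A} s j.

Ltac lcatoms s v j := lazymatch v with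
 | nil => idtac
 | ?M :: ?v' => (have -> : M = lcf (fun i => nth 0 s i) (fun i => (i == j)%:R) by rewrite -(lcf_atom s j));
     lcatoms s v' (S j)
 end.
Ltac lcallf s := let v := eval unfold s in s in lcatoms s v 0%N.


Ltac lcnormf := repeat progress rewrite ?lcfZ ?lcfN ?lcfD ?lcfB.
Ltac lcfinf := apply: lcf_ext12; cbv beta; rewrite /=.

Ltac lcexp := repeat progress rewrite ?mulrDl ?mulrDr ?mulrBl ?mulrBr ?mulNr ?mulrN
   -?scalerAl -?scalerAr ?mulrA ?scalerN ?scalerBr ?scalerDr ?scalerA.
Ltac lcsolve s := lcallf s; lcnormf; lcfinf.
Ltac fld := field; try assumption.

Section GenS.
Variable (K : fieldType) (A : algType K).

Lemma lrel (a b c : A) : a * b = c -> forall z, z * a * b = z * c.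
Proof. by move=> h z; rewrite -mulrA h. Qed.
Arguments lrel {a b c}.

Lemma genZsq (a b Z : A) (c al be : K) :
  Z = a * b - c *: (b * a) -> a * Z = al *: (Z * a) -> b * Z = be *: (Z * b) ->
  Z * Z = (al * be) *: (Z * Z).
Proof.
move=> hZ ha hb.
have e1 : Z * Z = a * (b * Z) - c *: (b * (a * Z)).
  by rewrite {1}hZ mulrBl -scalerAl !mulrA.
rewrite {1}e1 ha hb -!scalerAr !mulrA ha hb -!scalerAl !scalerA -!mulrA.
rewrite {4}hZ mulrBr -scalerAr scalerBr scalerA !mulrA.
by congr (_ *: _ - _ *: _); ring.
Qed.

Lemma gen_col (P Q R : A) (c : K) :
  P * P = 0 -> R = P * Q - c *: (Q * P) -> P * R = - (c *: (R * P)).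
Proof.
move=> hP ->; lcexp; rewrite ?hP ?(lrel hP); lcexp.
rewrite ?mul0r ?mulr0 ?scaler0 ?subr0 ?sub0r.
by [].
Qed.

Lemma gen_row (P Q R : A) (c : K) :
  P * P = 0 -> R = Q * P - c *: (P * Q) -> R * P = - (c *: (P * R)).
Proof.
move=> hP ->; lcexp; rewrite ?hP ?(lrel hP); lcexp.
by rewrite ?mul0r ?mulr0 ?scaler0 ?subr0 ?sub0r.
Qed.

Lemma gen_GSa (x g : A) (c : K) : c != 0 ->
  x * x * g - (c + c^-1) *: (x * g * x) + g * (x * x) = 0 ->
  x * (g * x - c *: (x * g)) = c *: ((g * x - c *: (x * g)) * x).
Proof.
move=> hc hS; apply/eqP; rewrite -subr_eq0; apply/eqP.
rewrite -[RHS](scaler0 _ (- c)) -[in RHS]hS; lcexp.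
pose s := [:: x * g * x; x * x * g; g * x * x].
by lcsolve s; fld.
Qed.

Lemma gen_GSb (x g : A) (c : K) : c != 0 ->
  x * x * g - (c + c^-1) *: (x * g * x) + g * (x * x) = 0 ->
  x * (x * g - c *: (g * x)) = c^-1 *: ((x * g - c *: (g * x)) * x).
Proof.
move=> hc hS; apply/eqP; rewrite -subr_eq0; apply/eqP.
rewrite -[RHS](scaler0 _ 1) -[in RHS]hS; lcexp.
pose s := [:: x * g * x; x * x * g; g * x * x].
by lcsolve s; fld.
Qed.

Lemma gen_prop (f x y : A) (mu c : K) :
  f * x = x * f -> f * y = mu *: (y * f) ->
  f * (x * y - c *: (y * x)) = mu *: ((x * y - c *: (y * x)) * f) /\
  f * (y * x - c *: (x * y)) = mu *: ((y * x - c *: (x * y)) * f).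
Proof.
move=> hx hy; split; lcexp; rewrite ?hx ?hy; lcexp; rewrite ?(lrel hx) ?(lrel hy); lcexp;
  rewrite ?hx ?hy; lcexp.
- pose s := [:: x * y * f; y * x * f].
  by lcsolve s; ring.
- pose s := [:: x * y * f; y * x * f].
  by lcsolve s; ring.
Qed.

Lemma gen_nested (a b c1 d e : A) (q : K) :
  b = c1 * d - q *: (d * c1) -> e = a * d - q *: (d * a) -> a * c1 = - (q *: (c1 * a)) ->
  a * b = - (q *: (c1 * e)) - q *: (e * c1) - q ^+ 2 *: (b * a).
Proof.
move=> hb he hac; rewrite hb he; lcexp.
rewrite ?(lrel hac); rewrite ?hac; lcexp.
pose s := [:: c1 * a * d; a * d * c1; c1 * d * a; d * c1 * a].
by lcsolve s; ring.
Qed.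

Lemma gen_crossing (a b c1 e x : A) (q : K) : q != 0 ->
  a = e * x - q *: (x * e) -> c1 = b * x - q *: (x * b) ->
  e * b = - (q *: (b * e)) -> e * c1 = - (c1 * e) ->
  a * b = - (b * a) + (q^-1 - q) *: (c1 * e).
Proof.
move=> hq ha hc1 heb hec.
have hxb : x * b = q^-1 *: (b * x - c1).
  rewrite hc1; lcexp; pose s := [:: x * b; b * x]; by lcsolve s; fld.
rewrite ha; lcexp.
do 3 (rewrite ?(lrel hxb) ?(lrel heb) ?hxb ?heb ?hec; lcexp).
pose s := [:: b * e * x; b * x * e; c1 * e].
by lcsolve s; fld.
Qed.
Lemma gen_interior (a b cc : A) (c : K) : c != 0 -> 1 + c ^+ 2 != 0 ->
  b * b * a - (c + c^-1) *: (b * a * b) + a * (b * b) = 0 ->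
  b * b * cc - (c + c^-1) *: (b * cc * b) + cc * (b * b) = 0 ->
  a * cc = cc * a ->
  b * ((cc * b - c *: (b * cc)) * a - c *: (a * (cc * b - c *: (b * cc)))) =
  ((cc * b - c *: (b * cc)) * a - c *: (a * (cc * b - c *: (b * cc)))) * b.
Proof.
move=> hcd hc Sa Sc Kac.
set Z := (cc * b - c *: (b * cc)) * a - c *: (a * (cc * b - c *: (b * cc))).
have key : (1 + c ^+ 2) *: (b * Z - Z * b) =
  c *: (cc * (b * b * a - (c + c^-1) *: (b * a * b) + a * (b * b))
   - c ^+ 2 *: ((b * b * a - (c + c^-1) *: (b * a * b) + a * (b * b)) * cc)
   + c ^+ 2 *: (a * (b * b * cc - (c + c^-1) *: (b * cc * b) + cc * (b * b)))
   - (b * b * cc - (c + c^-1) *: (b * cc * b) + cc * (b * b)) * a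
   + c ^+ 2 *: (b * b * (a * cc - cc * a)) - (1 + c ^+ 2) *: (b * (a * cc - cc * a) * b)
   + (a * cc - cc * a) * b * b).
  { rewrite /Z; lcexp.
  pose s := [:: a * b * b * cc; a * b * cc * b; a * cc * b * b; b * a * b * cc; b * a * cc * b; b * b * a * cc; b * b * cc * a; b * cc * a * b; b * cc * b * a; cc * a * b * b; cc * b * a * b; cc * b * b * a].
  lcallf s. lcnormf. lcfinf. all: field; assumption. }
move: key; rewrite Sa Sc Kac subrr !(mulr0, mul0r, scaler0, subr0, addr0) => /eqP.
by rewrite scaler_eq0 (negPf hc) /= subr_eq0 => /eqP.
Qed.

Lemma gen_assoc (f X Y : A) (c c' : K) : f * X = X * f ->
  (X * Y - c *: (Y * X)) * f - c' *: (f * (X * Y - c *: (Y * X))) =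
  X * (Y * f - c' *: (f * Y)) - c *: ((Y * f - c' *: (f * Y)) * X).
Proof.
move=> h; lcexp; rewrite ?h ?(lrel h); lcexp.
pose s := [:: X * Y * f; Y * X * f; X * f * Y; f * Y * X].
by lcsolve s; ring.
Qed.

Lemma anti_sym (x y : A) : x * y = (-1) *: (y * x) -> y * x = (-1) *: (x * y).
Proof. by move=> h; rewrite h scalerA mulrNN mulr1 scale1r. Qed.

Lemma inv_rel (x y : A) (k : K) : k != 0 -> x * y = k *: (y * x) -> y * x = k^-1 *: (x * y).
Proof. by move=> hk h; rewrite h scalerA mulVf // scale1r. Qed.

Lemma sq_from (Z : A) (k : K) : 1 - k != 0 -> Z * Z = k *: (Z * Z) -> Z * Z = 0.
Proof.
move=> hk h; apply/eqP; have : (1 - k) *: (Z * Z) == 0 by rewrite scalerBl -h scale1r subrr.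
by rewrite scaler_eq0 (negPf hk).
Qed.
Lemma sq_fromq (Z : A) (q : K) : 1 + q ^+ 2 != 0 ->
  Z * Z = (q * - q) *: (Z * Z) \/ Z * Z = ((- q) * q) *: (Z * Z) -> Z * Z = 0.
Proof.
move=> hq [] h; apply: (sq_from _ h).
  by have -> : 1 - q * - q = 1 + q ^+ 2 by ring.
by have -> : 1 - (- q) * q = 1 + q ^+ 2 by ring.
Qed.
End GenS.
Unset Implicit Arguments. Set Strict Implicit.

Lemma qq_neq0 : qq != 0.
Proof. by rewrite /qq -tofrac0 tofrac_eq polyX_eq0. Qed.

Lemma q1 : 1 + qq ^+ 2 != 0.
Proof.
rewrite /qq -tofrac1 -tofracXn -tofracD -tofrac0 tofrac_eq.
apply/negP => /eqP h.
have := congr1 (fun p : {poly algC} => p.[0]) h.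
rewrite hornerD hornerC hornerXn expr0n.
rewrite (_ : (2 == 0)%N = false) // mulr0n addr0 horner0 => /eqP.
by rewrite oner_eq0.
Qed.



Lemma gen_inv_sq (K : fieldType) (x : K) : x != 0 -> 1 + x ^+ 2 != 0 -> 1 + x^-1 ^+ 2 != 0.
Proof.
move=> hx h1; have -> : 1 + x^-1 ^+ 2 = x^-1 ^+ 2 * (1 + x ^+ 2) by field.
by rewrite mulf_neq0 // expf_neq0 // invr_neq0.
Qed.

Lemma q2 : 1 + qq^-1 ^+ 2 != 0.
Proof. exact: gen_inv_sq qq_neq0 q1. Qed.

Section Uq.
Variables (m n : nat) (A : algType Cq) (F : nat -> A).
Hypothesis hfar : forall i j, (1 <= i < m + n)%N -> (1 <= j < m + n)%N ->
  (i.+1 < j)%N \/ (j.+1 < i)%N -> F i * F j = F j * F i.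

Hypothesis hser : forall i j, (1 <= i < m + n)%N -> (1 <= j < m + n)%N ->
  (j == i.+1) || (i == j.+1) -> i != m ->
  F i * F i * F j - (qq + qq^-1) *: (F i * F j * F i) + F j * (F i * F i) = 0.
Hypothesis hsq : F m * F m = 0.
Hypothesis hm : (1 <= m)%N.
Hypothesis hn : (1 <= n)%N.
Hypothesis hquart : (2 <= m)%N -> (2 <= n)%N ->
  Fij m F m.-1 (m + 2) * F m + F m * Fij m F m.-1 (m + 2) = 0.

Local Notation Fr := (Frec m F).
Local Notation G := (Fij m F).

Lemma frec_succ d a : Fr d.+1 a = Fr d a.+1 * F a - qi m a.+1 *: (F a * Fr d a.+1).
Proof. by rewrite /= addrC. Qed.

Lemma far_rec d a j : (1 <= a)%N -> (a + d < m + n)%N -> (1 <= j < m + n)%N ->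
  (j.+1 < a)%N || (a + d.+1 < j)%N -> F j * Fr d a = Fr d a * F j.
Proof.
elim: d a => [|d IH] a ha had hj hja.
  rewrite /=; apply: hfar => //; first by lia.
  by move: hja; rewrite addn1 => /orP[] ->; [left|right].
rewrite frec_succ.
have hFa : F j * F a = 1 *: (F a * F j).
  rewrite scale1r; apply: hfar => //; first by lia.
  by case/orP: hja => h; [left|right]; lia.
have [h1 _] := gen_prop (qi m a.+1) (IH a.+1 ltac:(lia) ltac:(lia) hj ltac:(lia)) hFa.
by rewrite h1 scale1r.
Qed.

Lemma G_far a b j : (1 <= a < b)%N -> (b <= m + n)%N -> (1 <= j < m + n)%N ->
  (j.+1 < a)%N || (b < j)%N -> F j * G a b = G a b * F j.
Proof.
move=> hab hb hj hja; rewrite /Fij; apply: far_rec => //; try lia.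
Qed.

Lemma indep_rec d e a : (1 <= a)%N -> (a + d + e.+1 < m + n)%N ->
  Fr (d + e).+1 a = Fr e (a + d).+1 * Fr d a - qi m (a + d).+1 *: (Fr d a * Fr e (a + d).+1).
Proof.
elim: d a => [|d IH] a ha hade.
  by rewrite add0n addn0 frec_succ.
rewrite addSn frec_succ (IH a.+1) ?addSn ?addnS //; last by lia.
rewrite [Fr d.+1 a]frec_succ; apply: gen_assoc.
apply: far_rec; lia.
Qed.

Lemma G_indep a c b : (1 <= a)%N -> (a < c < b)%N -> (b <= m + n)%N ->
  G a b = G c b * G a c - qi m c *: (G a c * G c b).
Proof.
move=> ha hacb hb; rewrite /Fij.
have -> : (b - a).-1 = ((c - a).-1 + (b - c).-1).+1 by lia.
rewrite indep_rec //; last by lia.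
by have -> : (a + (c - a).-1).+1 = c by lia.
Qed.

Lemma G_one a : G a a.+1 = F a.
Proof. by rewrite /Fij subSnn. Qed.

Lemma far_comm2 (X : A) d c : (forall j, (c <= j <= c + d)%N -> F j * X = X * F j) ->
  Fr d c * X = X * Fr d c.
Proof.
elim: d c => [|d IH] c h; first by rewrite /= -h ?addn0 ?leqnn.
rewrite frec_succ.
have h1 : X * Fr d c.+1 = Fr d c.+1 * X by rewrite IH // => j hj; apply: h; lia.
have h2 : X * F c = 1 *: (F c * X) by rewrite scale1r h // leqnn /=; lia.
have [e1 _] := gen_prop (qi m c.+1) h1 h2.
by rewrite e1 scale1r.
Qed.

Lemma G_far2 a b c d : (1 <= a < b)%N -> (b < c < d)%N -> (d <= m + n)%N ->
  G c d * G a b = G a b * G c d.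
Proof.
move=> hab hbcd hd; rewrite {1 3}/Fij; apply: far_comm2 => j hj.
apply: G_far => //; lia.
Qed.

Lemma qi_le x : (x <= m)%N -> qi m x = qq.
Proof. by rewrite /qi => ->. Qed.
Lemma qi_gt x : (m < x)%N -> qi m x = qq^-1.
Proof. by move=> h; rewrite /qi leqNgt h. Qed.

Lemma qqK : qq^-1^-1 = qq.
Proof. by rewrite invrK. Qed.

Lemma serreI i j : (1 <= i < m + n)%N -> (1 <= j < m + n)%N ->
  (j == i.+1) || (i == j.+1) -> i != m ->
  F i * F i * F j - (qq^-1 + qq^-1^-1) *: (F i * F j * F i) + F j * (F i * F i) = 0.
Proof. by move=> *; rewrite qqK (addrC qq^-1); apply: hser. Qed.

Lemma sq_m t : (m < t <= m + n)%N -> G m t * G m t = 0.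
Proof.
elim: t => [|t IH] ht; first by lia.
have [ht1|ht1] := eqVneq t m.
  by subst t; rewrite G_one hsq.
have hmt : (m < t)%N by lia.
have hZ : G m t.+1 = F t * G m t - qq^-1 *: (G m t * F t).
  by rewrite (@G_indep _ t _) ?G_one ?qi_gt //; lia.
have hV : G m t * G m t.+1 = (- qq) *: (G m t.+1 * G m t).
  have := gen_row (IH ltac:(lia)) hZ; rewrite -scaleNr => /inv_rel -> //.
    by rewrite invrN qqK.
  by rewrite oppr_eq0 invr_neq0 // qq_neq0.
have hh : F t * G m t.+1 = qq *: (G m t.+1 * F t).
  have [ht2|ht2] := eqVneq t m.+1.
    subst t; rewrite hZ G_one.
    have := gen_GSb (invr_neq0 qq_neq0) (@serreI m.+1 m ltac:(lia) ltac:(lia) ltac:(lia) ltac:(lia)).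
    by rewrite qqK.
  have hW : G t.-1 t.+1 = F t * F t.-1 - qq^-1 *: (F t.-1 * F t).
    have e1 : G t.-1 t = F t.-1.
      by rewrite -{2}(@prednK t) ?G_one //; lia.
    by rewrite (@G_indep _ t _) ?G_one ?e1 ?qi_gt //; lia.
  have hZ2 : G m t.+1 = G t.-1 t.+1 * G m t.-1 - qi m t.-1 *: (G m t.-1 * G t.-1 t.+1).
    by rewrite (@G_indep _ t.-1 _) //; lia.
  have hFX : F t * G m t.-1 = G m t.-1 * F t by apply: G_far; lia.
  have hFW : F t * G t.-1 t.+1 = qq *: (G t.-1 t.+1 * F t).
    rewrite hW.
    have := gen_GSb (invr_neq0 qq_neq0) (@serreI t t.-1 ltac:(lia) ltac:(lia) ltac:(lia) ltac:(lia)).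
    by rewrite qqK.
  by have [_ ] := gen_prop (qi m t.-1) hFX hFW; rewrite -hZ2.
have := genZsq hZ hh hV => h.
by apply: (sq_fromq q1); left.
Qed.

Lemma sq_all s t : (1 <= s <= m)%N -> (m < t <= m + n)%N -> G s t * G s t = 0.
Proof.
move=> hs ht; move: {2}(m - s)%N (erefl (m - s)%N) => k hk.
elim: k s hk hs => [|k IH] s hk hs.
  have -> : s = m by lia.
  exact: sq_m.
have hZ : G s t = G s.+1 t * F s - qq *: (F s * G s.+1 t).
  by rewrite (@G_indep _ s.+1 _) ?G_one ?qi_le //; lia.
have hY : G s.+1 t * G s t = (- qq) *: (G s t * G s.+1 t).
  by rewrite scaleNr; apply: gen_col hZ; apply: IH; lia.
have hf : F s * G s t = qq *: (G s t * F s).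
  have [ht2|ht2] := eqVneq t s.+2.
    subst t; rewrite (@G_indep _ s.+1 _) ?G_one ?qi_le //; try lia.
    by apply: gen_GSa qq_neq0 _; apply: hser => //; lia.
  have hW : G s s.+2 = F s.+1 * F s - qq *: (F s * F s.+1).
    by rewrite (@G_indep _ s.+1 _) ?G_one ?qi_le //; lia.
  have hZ2 : G s t = G s.+2 t * G s s.+2 - qi m s.+2 *: (G s s.+2 * G s.+2 t).
    by rewrite (@G_indep _ s.+2 _) //; lia.
  have hFX : F s * G s.+2 t = G s.+2 t * F s by apply: G_far; lia.
  have hFW : F s * G s s.+2 = qq *: (G s s.+2 * F s).
    by rewrite hW; apply: gen_GSa qq_neq0 _; apply: hser => //; lia.
  by have [h _] := gen_prop (qi m s.+2) hFX hFW; rewrite hZ2.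
have := genZsq hZ hY hf => h.
by apply: (sq_fromq q1); right.
Qed.

Lemma int_base j c : (2 <= j)%N -> (j.+2 <= m + n)%N -> j != m ->
  qi m j = c -> qi m j.+1 = c -> c != 0 -> 1 + c ^+ 2 != 0 ->
  F j * F j * F j.-1 - (c + c^-1) *: (F j * F j.-1 * F j) + F j.-1 * (F j * F j) = 0 ->
  F j * F j * F j.+1 - (c + c^-1) *: (F j * F j.+1 * F j) + F j.+1 * (F j * F j) = 0 ->
  F j * G j.-1 j.+2 = G j.-1 j.+2 * F j.
Proof.
move=> hj hjn hjm e1 e2 hc hc2 S1 S2.
have ej : j.-1.+1 = j by lia.
have hW : G j j.+2 = F j.+1 * F j - c *: (F j * F j.+1).
  by rewrite (@G_indep _ j.+1 _) ?G_one ?e2 //; lia.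
have hZ : G j.-1 j.+2 = G j j.+2 * F j.-1 - c *: (F j.-1 * G j j.+2).
  have e0 : G j.-1 j = F j.-1 by rewrite -{2}ej G_one.
  by rewrite (@G_indep _ j _) ?e0 ?e1 //; lia.
rewrite hZ hW; apply: gen_interior => //.
by apply: hfar; lia.
Qed.

Lemma G_int j a b : (1 <= a < j)%N -> (j.+1 < b <= m + n)%N -> j != m ->
  F j * G a b = G a b * F j.
Proof.
move=> ha hb hjm.
have base : F j * G j.-1 j.+2 = G j.-1 j.+2 * F j.
  have [hjm'|hjm'] := leqP j m.
    apply: (@int_base j qq) => //; try lia.
    - by rewrite qi_le.
    - by rewrite qi_le //; lia.
    - exact: qq_neq0.
    - exact: q1.
    - by apply: hser => //; lia.
    - by apply: hser => //; lia.
  apply: (@int_base j qq^-1) => //; try lia.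
  - by rewrite qi_gt.
  - by rewrite qi_gt //; lia.
  - by rewrite invr_neq0 // qq_neq0.
  - exact: q2.
  - by apply: serreI => //; lia.
  - by apply: serreI => //; lia.
have right : forall b', (j.+1 < b' <= m + n)%N -> F j * G j.-1 b' = G j.-1 b' * F j.
  move=> b' hb'; have [e|ne] := eqVneq b' j.+2; first by subst b'.
  rewrite (@G_indep _ j.+2 _); try lia.
  have hx : F j * G j.+2 b' = G j.+2 b' * F j by apply: G_far; lia.
  have hy : F j * G j.-1 j.+2 = 1 *: (G j.-1 j.+2 * F j) by rewrite scale1r.
  by have [-> _] := gen_prop (qi m j.+2) hx hy; rewrite scale1r.
have [e|ne] := eqVneq a j.-1; first by subst a; apply: right.
rewrite (@G_indep _ j.-1 _); try lia.
have hx : F j * G a j.-1 = G a j.-1 * F j by apply: G_far; lia.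
have hy : F j * G j.-1 b = 1 *: (G j.-1 b * F j) by rewrite scale1r right.
by have [_ ->] := gen_prop (qi m j.-1) hx hy; rewrite scale1r.
Qed.

Definition Nrel s k i t := G s k * G i t = (-1) *: (G i t * G s k).

Lemma Ext s k i t : (2 <= s <= m)%N -> (m < k)%N -> (k.+1 <= m + n)%N ->
  Nrel s k s.-1 k.+1 -> (1 <= i <= s.-1)%N -> (k.+1 <= t <= m + n)%N -> Nrel s k i t.
Proof.
move=> hs hk hkn hA hi ht.
have step1 : Nrel s k i k.+1.
  have [e|ne] := eqVneq i s.-1; first by subst i.
  rewrite /Nrel (@G_indep i s.-1 k.+1); try lia.
  have hx : G s k * G i s.-1 = G i s.-1 * G s k by apply: G_far2; lia.
  by have [_ h] := gen_prop (qi m s.-1) hx hA.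
have [e|ne] := eqVneq t k.+1; first by subst t.
rewrite /Nrel (@G_indep i k.+1 t); try lia.
have hx : G s k * G k.+1 t = G k.+1 t * G s k by rewrite (@G_far2 s k) //; lia.
by have [-> _] := gen_prop (qi m k.+1) hx step1.
Qed.

Lemma A_m k : (2 <= m)%N -> (m < k)%N -> (k.+1 <= m + n)%N -> Nrel m k m.-1 k.+1.
Proof.
move=> hm2; elim: k => [|k IH] hk hkn; first by lia.
have [e|ne] := eqVneq k m.
  subst k; rewrite /Nrel G_one -addn2.
  rewrite scaleN1r; apply/eqP; rewrite -addr_eq0 addrC; apply/eqP.
  by apply: hquart; lia.
have hc1x : G m.-1 k.+2 * F k = F k * G m.-1 k.+2.
  by rewrite (@G_int k) //; lia.
have hc1y : G m.-1 k.+2 * G m k = (-1) *: (G m k * G m.-1 k.+2).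
  apply: anti_sym; apply: (@Ext m k) => //; try lia.
  by apply: IH; lia.
have [h _] := gen_prop (qi m k) hc1x hc1y.
apply: anti_sym; rewrite (@G_indep m k k.+1) ?G_one //; lia.
Qed.

Lemma A_all s k : (2 <= s <= m)%N -> (m < k)%N -> (k.+1 <= m + n)%N -> Nrel s k s.-1 k.+1.
Proof.
move=> hs hk hkn; move: {2}(m - s)%N (erefl (m - s)%N) => d hd.
elim: d s hd hs => [|d IH] s hd hs.
  have -> : s = m by lia.
  by apply: A_m => //; lia.
have hc1x : G s.-1 k.+1 * F s = F s * G s.-1 k.+1.
  by rewrite (@G_int s) //; lia.
have hc1y : G s.-1 k.+1 * G s.+1 k = (-1) *: (G s.+1 k * G s.-1 k.+1).
  apply: anti_sym; apply: (@Ext s.+1 k) => //; try lia.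
  by apply: IH; lia.
have [_ h] := gen_prop qq hc1x hc1y.
apply: anti_sym; rewrite (@G_indep s s.+1 k) ?G_one ?qi_le //; lia.
Qed.

Lemma N_all s k i t : (1 <= i)%N -> (i < s <= m)%N -> (m < k < t)%N -> (t <= m + n)%N ->
  Nrel s k i t.
Proof.
move=> hi his hkt ht; apply: (@Ext s k) => //; try lia.
by apply: A_all; lia.
Qed.

Lemma row_rel i k t : (1 <= i <= m)%N -> (m < k < t)%N -> (t <= m + n)%N ->
  G i k * G i t = (- qq) *: (G i t * G i k).
Proof.
move=> hi hkt ht.
have hR : G i t = G k t * G i k - qq^-1 *: (G i k * G k t).
  by rewrite (@G_indep i k t) ?qi_gt //; lia.
have := gen_row (@sq_all i k ltac:(lia) ltac:(lia)) hR; rewrite -scaleNr => /inv_rel -> //.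
  by rewrite invrN qqK.
by rewrite oppr_eq0 invr_neq0 // qq_neq0.
Qed.

Lemma kill (y a b : A) : y * a = 0 -> y * (a * b) = 0.
Proof. by move=> h; rewrite mulrA h mul0r. Qed.
Arguments kill {y a} b.

Lemma step_case i k s t (y : A) : inI1 m n (i, k) -> inI1 m n (s, t) ->
  preceqb (s, t) (i, k) ->
  (forall s' t', inI1 m n (s', t') -> precb (s', t') (i, k) -> y * G s' t' = 0) ->
  y * G i k * G s t = 0.
Proof.
rewrite /inI1 /preceqb /precb /= => /and4P[hi1 hi2 hk1 hk2] /and4P[hs1 hs2 ht1 ht2] hp hy.
have hyR s' t' : (1 <= s' <= m)%N -> (m < t' <= m + n)%N ->
    (k < t')%N || ((t' == k) && (s' < i))%N -> y * G s' t' = 0.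
  by move=> h1 h2 h3; apply: hy => //; rewrite /inI1 /=; apply/and4P; split; lia.
rewrite -mulrA.
have [ekt|nkt] := eqVneq t k.
  subst t; have [esi|nsi] := eqVneq s i.
    by subst s; rewrite (@sq_all i k) ?mulr0 //; lia.
  have hsi : (s < i)%N.
    by move: hp; rewrite ltnn /= eqxx /= xpair_eqE eqxx (negPf nsi) /= orbF.
  have hR : G s k = G i k * G s i - qq *: (G s i * G i k).
    by rewrite (@G_indep s i k) ?qi_le //; lia.
  rewrite (gen_col (@sq_all i k ltac:(lia) ltac:(lia)) hR) mulrN -scalerAr mulrA.
  by rewrite (@hyR s k) ?mul0r ?scaler0 ?oppr0 //; try lia; rewrite eqxx hsi orbT.
have hkt : (k < t)%N.
  case/orP: hp => [/orP[//|/andP[/eqP e _]]|/eqP[_ e]]; by rewrite e eqxx in nkt.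
have [esi|nsi] := eqVneq s i.
  subst s; rewrite (@row_rel i k t) //; try lia.
  by rewrite -scalerAr mulrA (@hyR i t) ?mul0r ?scaler0 //; lia.
have [hsi|his|esi'] := ltngtP s i; last by rewrite esi' eqxx in nsi.
  rewrite (@gen_nested _ _ (G i k) (G s t) (G i t) (G s i) (G s k) qq); first last.
  - by rewrite (@row_rel i k t) ?scaleNr //; lia.
  - by rewrite (@G_indep s i k) ?qi_le //; lia.
  - by rewrite (@G_indep s i t) ?qi_le //; lia.
  rewrite !(mulrDr, mulrBr, mulrN) -!scalerAr.
  rewrite (kill _ (@hyR i t _ _ _)) ?(kill _ (@hyR s k _ _ _)) ?(kill _ (@hyR s t _ _ _));
    try lia.
  by rewrite !scaler0 !oppr0 !addr0.
rewrite (@gen_crossing _ _ (G i k) (G s t) (G i t) (G s k) (G i s) qq qq_neq0); first by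
  rewrite mulrDr mulrN -scalerAr (kill _ (@hyR s t _ _ _)) ?(kill _ (@hyR i t _ _ _)) ?oppr0
   ?scaler0 ?addr0 //; lia.
- by rewrite (@G_indep i s k) ?qi_le //; lia.
- by rewrite (@G_indep i s t) ?qi_le //; lia.
- by rewrite (@row_rel s k t) ?scaleNr //; lia.
- by have := @N_all s k i t ltac:(lia) ltac:(lia) ltac:(lia) ltac:(lia); rewrite /Nrel scaleN1r.
Qed.
End Uq.

Lemma precb_asym a b : precb a b -> precb b a -> False.
Proof. by case: a b => [a1 a2] [b1 b2]; rewrite /precb /=; lia. Qed.

Lemma mem_I1seq m n p : (p \in I1seq m n) = inI1 m n p.
Proof.
case: p => s t; rewrite /I1seq /inI1 /=.
apply/flatten_mapP/idP.
  case=> t'; rewrite mem_rev mem_iota => ht' /mapP[s' hs' [-> ->]].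
  move: hs'; rewrite mem_iota; lia.
move=> h; exists t; first by rewrite mem_rev mem_iota; lia.
by apply/mapP; exists s => //; rewrite mem_iota; lia.
Qed.

Lemma I1seqS m n : I1seq m n.+1 = [seq (s, (m.+1 + n)%N) | s <- iota 1 m] ++ I1seq m n.
Proof.
by rewrite /I1seq -[n.+1]addn1 iotaD rev_cat /=.
Qed.

Lemma pairwise_I1seq m n : pairwise precb (I1seq m n).
Proof.
elim: n => [|n IH]; first by [].
rewrite I1seqS pairwise_cat IH andbT; apply/andP; split.
  apply/allrelP => a b /mapP[s _ ->]; rewrite mem_I1seq /inI1 /precb /=; case: b => s' t' /=; lia.
rewrite pairwise_map.
have h : pairwise ltn (iota 1 m).
  by rewrite -sorted_pairwise ?iota_ltn_sorted //; exact: ltn_trans.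
by apply: sub_pairwise h => a b; rewrite /relpre /precb /= ltnn eqxx.
Qed.

Section SeqMain.
Variables (T : eqType) (R : pzRingType) (lt : rel T) (x : T -> R).
Hypothesis asym : forall a b, lt a b -> lt b a -> False.

Definition Hstep (s : seq T) := forall p r, p \in s -> r \in s -> lt r p || (r == p) ->
  forall y, (forall r', r' \in s -> lt r' p -> y * x r' = 0) -> y * x p * x r = 0.

Lemma seq_main s : pairwise lt s -> Hstep s ->
  [/\ (forall r, r \in s -> (\prod_(r' <- s) x r') * x r = 0),
      (forall p r, p \in s -> r \in s -> lt r p || (r == p) ->
         (\prod_(r' <- s | lt r' p || (r' == p)) x r') * x r = 0) &
      (forall p r, p \in s -> r \in s -> lt r p ->
         (\prod_(r' <- s | lt r' p) x r') * x r = 0)].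
Proof.
have irr : forall a, lt a a = false.
  by move=> a0; case e: (lt a0 a0) => //; case: (asym _ _ e e).
elim/last_ind: s => [|s z IH]; first by split.
rewrite pairwise_rcons => /andP[/allP hz hs] H.
have Hs : Hstep s.
  move=> p r hp hr hrp y hy; apply: H; rewrite ?mem_rcons ?in_cons ?hp ?hr ?orbT //.
  move=> r'; rewrite mem_rcons in_cons => /orP[/eqP ->|hr'] hlt; last exact: hy.
  by case: (asym _ _ hlt (hz _ hp)).
have [D C1 C2] := IH hs Hs.
have notz p : p \in s -> (p == z) = false.
  by move=> hp; apply/negbTE/negP => /eqP e; subst p; move: (hz _ hp); rewrite irr.
have zle p : p \in s -> (lt z p || (z == p)) = false.
  move=> hp; rewrite eq_sym notz // orbF; apply/negbTE/negP => h; exact: asym _ _ h (hz _ hp).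
have Dz : forall r, r \in rcons s z -> (\prod_(r' <- rcons s z) x r') * x r = 0.
  move=> r hr; rewrite big_rcons /=; apply: H => //.
  - by rewrite mem_rcons in_cons eqxx.
  - by move: hr; rewrite mem_rcons in_cons => /orP[->|hr]; [rewrite orbT | rewrite hz].
  move=> r'; rewrite mem_rcons in_cons => /orP[/eqP ->|hr']; first by rewrite irr.
  by move=> _; exact: D.
have prodz (P : pred T) : (forall r, r \in s -> P r) -> \prod_(r' <- s | P r') x r' = \prod_(r' <- s) x r'.
  by move=> hP; rewrite big_seq_cond [RHS]big_seq; apply: eq_bigl => r; case: (boolP (r \in s)) => //= hr; rewrite hP.
split => //.
- move=> p r; rewrite !mem_rcons !in_cons => hp hr hrp.
  have [epz|npz] := eqVneq p z.
    subst p; rewrite big_rcons eqxx orbT prodz; last by move=> r' /hz ->.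
    by rewrite -big_rcons; apply: Dz; rewrite mem_rcons in_cons.
  have hp' : p \in s by move: hp; rewrite (negPf npz).
  rewrite big_rcons zle //= mulr1.
  have hr' : r \in s.
    move: hr => /orP[/eqP e|//]; subst r; by rewrite zle in hrp.
  exact: C1.
- move=> p r; rewrite !mem_rcons !in_cons => hp hr hrp.
  have [epz|npz] := eqVneq p z.
    subst p; rewrite big_rcons irr /= mulr1 prodz; last by move=> r' /hz ->.
    have hr' : r \in s by move: hr => /orP[/eqP e|//]; subst r; rewrite irr in hrp.
    exact: D.
  have hp' : p \in s by move: hp; rewrite (negPf npz).
  have hzp : lt z p = false by apply/negbTE/negP => h; exact: asym _ _ h (hz _ hp').
  rewrite big_rcons hzp /= mulr1.
  have hr' : r \in s by move: hr => /orP[/eqP e|//]; subst r; rewrite hzp in hrp.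
  exact: C2.
Qed.
End SeqMain.

Theorem lemma5p3 (m n : nat) (hm : (1 <= m)%N) (hn : (1 <= n)%N)
  (A : algType Cq) (K Kinv E F : nat -> A) (hrel : Uq_rels m n K Kinv E F)
  (i k : nat) (hik : inI1 m n (i, k)) :
  (forall s t, inI1 m n (s, t) -> preceqb (s, t) (i, k) ->
     Fle m n F (i, k) * Fij m F s t = 0) /\
  (forall s t, inI1 m n (s, t) -> precb (s, t) (i, k) ->
     Flt m n F (i, k) * Fij m F s t = 0).
Proof.
case: hrel => _ [_ [_ [_ [_ [hsq [hfar' [hser' hq']]]]]]].
have hfar : forall i j, (1 <= i < m + n)%N -> (1 <= j < m + n)%N ->
    (i.+1 < j)%N \/ (j.+1 < i)%N -> F i * F j = F j * F i.
  by move=> i0 j0 h1 h2 h3; case: (hfar' i0 j0 h1 h2 h3).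
have hser : forall i j, (1 <= i < m + n)%N -> (1 <= j < m + n)%N ->
    (j == i.+1) || (i == j.+1) -> i != m ->
    F i * F i * F j - (qq + qq^-1) *: (F i * F j * F i) + F j * (F i * F i) = 0.
  by move=> i0 j0 h1 h2 h3 h4; case: (hser' i0 j0 h1 h2 h3 h4).
have hquart : (2 <= m)%N -> (2 <= n)%N ->
    Fij m F m.-1 (m + 2) * F m + F m * Fij m F m.-1 (m + 2) = 0.
  by move=> h1 h2; case: (hq' h1 h2).
pose x := fun r : nat * nat => Fij m F r.1 r.2.
have HS : @Hstep _ A precb x (I1seq m n).
  move=> [i0 k0] [s0 t0]; rewrite !mem_I1seq => hp hr hrp y hy.
  apply: (@step_case m n A F hfar hser hsq hm hn hquart i0 k0 s0 t0 y hp hr hrp).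
  by move=> s' t' h1 h2; apply: (hy (s', t')); rewrite ?mem_I1seq.
have [_ C1 C2] := @seq_main _ A precb x precb_asym _ (pairwise_I1seq m n) HS.
split.
- move=> s t hst hle; apply: (C1 (i, k) (s, t)); by rewrite ?mem_I1seq.
- move=> s t hst hle; apply: (C2 (i, k) (s, t)); by rewrite ?mem_I1seq.
Qed.
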